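(* Let $S=s_1,\ldots,s_n$ be a sequence of positive real numbers, $\gamma>0$, $k$ a positive integer and $\epsilon>0$. Let $(L^*,\alpha^*,\beta^* )$ be an optimal solution of $\textsc{Exp}$ for $S,\gamma,k$, let $g=(\prod_{i=1}^n s_i)^{1/n}$ and $\psi=n\log g$. Let $(L,\alpha,\beta)$ be the output of $\textit{ApproxExp}(S,\gamma,k,\epsilon)$. Then \[ \mathrm{score}_{\exp}(L,S;\alpha,\beta,\gamma)-\psi\le(1+\epsilon)\big(\mathrm{score}_{\exp}(L^*,S;\alpha^*,\beta^*,\gamma)-\psi\big). \] Moreover, if $g\ge1$, then $\mathrm{score}_{\exp}(L,S;\alpha,\beta,\gamma)\le(1+\epsilon)\,\mathrm{score}_{\exp}(L^*,S;\alpha^*,\beta^*,\gamma)$.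
   Context: A level sequence is $L=\ell_1,\ldots,\ell_n$ of integers with $0\le\ell_i\le k$; set $\ell_0=0$. The penalty is $\mathrm{pen}(x,y)=\max(y-x,0)\,\gamma\log n$; $p_{\exp}(s;\lambda)=\lambda e^{-\lambda s}$; for $\alpha\ge1$, $\beta>0$, $\mathrm{score}_{\exp}(L,S;\alpha,\beta,\gamma)=\sum_{i=1}^n\big[-\log p_{\exp}(s_i;\beta\alpha^{\ell_i})+\mathrm{pen}(\ell_{i-1},\ell_i)\big]$. Problem $\textsc{Exp}$: given $S,\gamma,k$, find $L$ and parameters $\alpha$ (the paper uses $\alpha>1$) and $\beta>0$ minimizing this score. $\textit{Viterbi}(S,\alpha,\beta,\gamma,k,p_{\exp})$ returns a level sequence minimizing the score for fixed $\alpha,\beta$. Algorithm $\textit{ExpAlpha}(S,\alpha,\gamma,k,\epsilon)$: let $\mu=\frac1n\sum_i s_i$ and $\beta=1/\mu$; while $\beta\ge1/(\alpha^k\mu)$: run $\textit{Viterbi}(S,\alpha,\beta,\gamma,k,p_{\exp})$ and set $\beta\leftarrow\beta/(1+\epsilon)$; return the best tested $(L,\beta)$. Algorithm $\textit{ApproxExp}(S,\gamma,k,\epsilon)$: let $\alpha=(\max_i s_i)/(\min_i s_i)$ and $c=(1+\epsilon)^{1/(2k)}$; while $\alpha\ge1$: run $\textit{ExpAlpha}(S,\alpha,\gamma,k,\epsilon/2)$ and set $\alpha\leftarrow\alpha/c$. Return the observed triple $(L,\alpha,\beta)$ with the smallest score. *)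

(* Defs.v *)
From Stdlib Require Import Reals Lra Lia.
Open Scope R_scope.

(* Data: a sequence S = s_1, ..., s_n is modelled by s : nat -> R, with only
   indices 1..n relevant.  A level sequence L = l_1..l_n is L : nat -> nat,
   only indices 1..n relevant; l_0 = 0 is hard-coded in [lprev]. *)

Fixpoint sumR (f : nat -> R) (n : nat) : R :=
  match n with O => 0 | S m => sumR f m + f (S m) end.

Fixpoint prodR (f : nat -> R) (n : nat) : R :=
  match n with O => 1 | S m => prodR f m * f (S m) end.

(* max / min over i = 1..n (meaningful for n >= 1) *)
Fixpoint maxS (s : nat -> R) (n : nat) : R :=
  match n with O => s 1%nat | S m => Rmax (maxS s m) (s (S m)) end.
Fixpoint minS (s : nat -> R) (n : nat) : R :=
  match n with O => s 1%nat | S m => Rmin (minS s m) (s (S m)) end.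

Definition valid_levels (n k : nat) (L : nat -> nat) : Prop :=
  forall i, (1 <= i <= n)%nat -> (L i <= k)%nat.

Definition lprev (L : nat -> nat) (i : nat) : nat :=
  match i with S (S j) => L (S j) | _ => O end.

Definition pen (n : nat) (gamma : R) (x y : nat) : R :=
  Rmax (INR y - INR x) 0 * gamma * ln (INR n).

Definition p_exp (s lambda : R) : R := lambda * exp (- lambda * s).

Definition score_exp (n : nat) (s : nat -> R) (L : nat -> nat)
    (alpha beta gamma : R) : R :=
  sumR (fun i => - ln (p_exp (s i) (beta * alpha ^ (L i)))
                 + pen n gamma (lprev L i) (L i)) n.

Definition viterbi_spec (n k : nat) (s : nat -> R) (gamma alpha beta : R)
    (L : nat -> nat) : Prop :=
  valid_levels n k L /\
  forall L', valid_levels n k L' ->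
    score_exp n s L alpha beta gamma <= score_exp n s L' alpha beta gamma.

Definition mean (n : nat) (s : nat -> R) : R := sumR s n / INR n.

(* ApproxExp: alpha runs through alpha0 / c^j while >= 1, where
   alpha0 = max s / min s, c = (1+eps)^(1/(2k)). *)
Definition approx_alpha (n k : nat) (s : nat -> R) (eps : R) (j : nat) : R :=
  (maxS s n / minS s n) / (Rpower (1 + eps) (/ (2 * INR k))) ^ j.

(* ExpAlpha(S, alpha, gamma, k, eps'): beta runs through (1/mu)/(1+eps')^m
   while beta >= 1/(alpha^k mu). *)
Definition expalpha_beta (n : nat) (s : nat -> R) (eps' : R) (m : nat) : R :=
  (/ mean n s) / (1 + eps') ^ m.

(* The pairs (alpha, beta) on which ApproxExp(S, gamma, k, eps) runs Viterbi
   (ExpAlpha being called with eps/2).  Both sequences are strictly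
   decreasing, so the indices reached by the while-loops are exactly those
   satisfying the loop condition. *)
Definition tested_pair (n k : nat) (s : nat -> R) (eps alpha beta : R) : Prop :=
  exists j m : nat,
    alpha = approx_alpha n k s eps j /\ 1 <= alpha /\
    beta = expalpha_beta n s (eps / 2) m /\
    / (alpha ^ k * mean n s) <= beta.

Definition geo_mean (n : nat) (s : nat -> R) : R := Rpower (prodR s n) (/ INR n).
Definition psi (n : nat) (s : nat -> R) : R := INR n * ln (geo_mean n s).

(* Main.v *)
Require Import Defs.
From Stdlib Require Import Reals Lra Lia Classical.
Open Scope R_scope.

Lemma lnle x y : 0 < x -> x <= y -> ln x <= ln y.
Proof. intros Hx Hxy. destruct (Rle_lt_or_eq_dec _ _ Hxy) as [h|h].
  left; apply ln_increasing; auto. subst; lra. Qed.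

Lemma ln_le_sub1 x : 0 < x -> ln x <= x - 1.
Proof. intros Hx. pose proof (exp_ineq1_le (ln x)). rewrite exp_ln in H; lra. Qed.

Lemma ln_le_half x : 0 < x -> ln x <= x / 2.
Proof. intros Hx. pose proof (sqrt_lt_R0 x Hx) as Hs.
  assert (E : ln x = 2 * ln (sqrt x)).
  { rewrite <- (sqrt_sqrt x) at 1 by lra. rewrite ln_mult by lra. ring. }
  pose proof (ln_le_sub1 _ Hs). pose proof (sqrt_sqrt x (Rlt_le _ _ Hx)).
  pose proof (pow2_ge_0 (sqrt x - 2)). simpl in *. nra. Qed.

Lemma sumR_le f g n : (forall i, (1 <= i <= n)%nat -> f i <= g i) -> sumR f n <= sumR g n.
Proof. induction n; simpl; intros H. lra.
  assert (sumR f n <= sumR g n) by (apply IHn; intros; apply H; lia).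
  specialize (H (S n)). assert (f (S n) <= g (S n)) by (apply H; lia). lra. Qed.

Lemma sumR_ext f g n : (forall i, (1 <= i <= n)%nat -> f i = g i) -> sumR f n = sumR g n.
Proof. intros H. apply Rle_antisym; apply sumR_le; intros i Hi; rewrite H; auto; lra. Qed.

Lemma sumR_plus f g n : sumR (fun i => f i + g i) n = sumR f n + sumR g n.
Proof. induction n; simpl; [ring| rewrite IHn; ring]. Qed.
Lemma sumR_minus f g n : sumR (fun i => f i - g i) n = sumR f n - sumR g n.
Proof. induction n; simpl; [ring| rewrite IHn; ring]. Qed.
Lemma sumR_scal c f n : sumR (fun i => c * f i) n = c * sumR f n.
Proof. induction n; simpl; [ring| rewrite IHn; ring]. Qed.
Lemma sumR_const c n : sumR (fun _ => c) n = INR n * c.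
Proof. induction n; simpl sumR; [simpl; ring| rewrite IHn, S_INR; ring]. Qed.

Lemma sumR_pos f n : (0 < n)%nat -> (forall i, (1 <= i <= n)%nat -> 0 < f i) -> 0 < sumR f n.
Proof. induction n; simpl; intros Hn H. lia.
  destruct n. simpl. specialize (H 1%nat). assert (0 < f 1%nat) by (apply H; lia). lra.
  assert (0 < sumR f (S n)) by (apply IHn; [lia| intros; apply H; lia]).
  assert (0 < f (S (S n))) by (apply H; lia). lra. Qed.

Lemma minmax_bound s n i : (1 <= i <= n)%nat -> minS s n <= s i <= maxS s n.
Proof. induction n; intros Hi. lia. simpl.
  destruct (Nat.eq_dec i (S n)) as [->|ne].
  - split; [apply Rmin_r | apply Rmax_r].
  - assert (H: (1 <= i <= n)%nat) by lia. specialize (IHn H).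
    pose proof (Rmin_l (minS s n) (s (S n))). pose proof (Rmax_l (maxS s n) (s (S n))). lra. Qed.

Lemma minS_pos s n : (forall i, (1 <= i <= n)%nat -> 0 < s i) -> (0 < n)%nat -> 0 < minS s n.
Proof. intros H Hn. induction n. lia. simpl. destruct n. simpl. unfold Rmin; destruct Rle_dec; apply H; lia.
  apply Rmin_glb_lt. apply IHn; [intros; apply H; lia| lia]. apply H; lia. Qed.

Lemma step_lemma (P : nat -> Prop) N : P 0%nat -> ~ P N -> exists m, (m < N)%nat /\ P m /\ ~ P (S m).
Proof. induction N; intros H0 HN. contradiction.
  destruct (classic (P N)) as [h|h]. exists N; split; [lia| auto].
  destruct (IHN H0 h) as [m [? ?]]. exists m; split; [lia|auto]. Qed.

Lemma pow_unbounded x M : 1 < x -> exists N, M < x ^ N.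
Proof. intros Hx. assert (B : forall N, 1 + INR N * (x - 1) <= x ^ N).
  { induction N. simpl; lra. rewrite S_INR; simpl. assert (0 <= INR N) by apply pos_INR.
    assert (x * (1 + INR N * (x - 1)) <= x * x ^ N) by (apply Rmult_le_compat_l; lra).
    assert (0 <= INR N * (x-1) * (x - 1)) by (apply Rmult_le_pos; [apply Rmult_le_pos|]; lra). nra. }
  destruct (INR_unbounded (M / (x - 1))) as [N HN]. exists N. specialize (B N).
  assert (INR N * (x - 1) > M / (x-1) * (x-1)) by (apply Rmult_gt_compat_r; lra).
  replace (M / (x-1) * (x-1)) with M in H by (field; lra). lra. Qed.

Lemma nlnp s l : 0 < l -> - ln (p_exp s l) = l * s - ln l.
Proof. intros H. unfold p_exp. rewrite ln_mult by (auto; apply exp_pos). rewrite ln_exp. ring. Qed.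

Lemma pen_nonneg n g x y : (0 < n)%nat -> 0 < g -> 0 <= pen n g x y.
Proof. intros Hn Hg. unfold pen. apply Rmult_le_pos. apply Rmult_le_pos. apply Rmax_r. lra.
  rewrite <- ln_1. apply lnle. lra. apply (le_INR 1). lia. Qed.

Lemma score_eq n s L a b g : 0 < a -> 0 < b ->
  score_exp n s L a b g = sumR (fun i => (b * a ^ L i) * s i - ln (b * a ^ L i) + pen n g (lprev L i) (L i)) n.
Proof. intros Ha Hb. unfold score_exp. apply sumR_ext. intros i _. rewrite nlnp. ring.
  apply Rmult_lt_0_compat; auto. apply pow_lt; auto. Qed.

Lemma psi_eq n s : (0 < n)%nat -> (forall i, (1 <= i <= n)%nat -> 0 < s i) ->
  psi n s = sumR (fun i => ln (s i)) n.
Proof. intros Hn Hs. unfold psi, geo_mean, Rpower. rewrite ln_exp.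
  assert (INR n <> 0) by (apply not_0_INR; lia).
  replace (INR n * (/ INR n * ln (prodR s n))) with (ln (prodR s n)) by (field; auto).
  clear H Hn. induction n; simpl. apply ln_1.
  assert (forall i, (1 <= i <= n)%nat -> 0 < s i) by (intros; apply Hs; lia).
  assert (0 < prodR s n). { clear IHn. induction n; simpl. lra. apply Rmult_lt_0_compat. apply IHn; intros; apply H; lia. apply H; lia. }
  rewrite ln_mult; auto. rewrite IHn; auto. apply Hs; lia. Qed.

Definition Good (mn mx T T' : R) : Prop :=
  (/ mn <= T' /\ T' <= T) \/ (T <= T' /\ T' <= / mx) \/ T' = T.

Lemma term_mono mn mx s T T' : 0 < mn -> mn <= s <= mx -> 0 < T -> 0 < T' ->
  Good mn mx T T' -> T' * s - ln T' <= T * s - ln T.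
Proof. intros Hmn Hs HT HT' [[h2 h1]|[[h1 h2]|h]].
  - set (u := T / T'). assert (Hu : 1 <= u) by (unfold u; apply (Rmult_le_reg_r T'); auto; field_simplify; lra).
    assert (ET : T = T' * u) by (unfold u; field; lra).
    rewrite ET, ln_mult by lra. pose proof (ln_le_sub1 u ltac:(lra)).
    assert (1 <= T' * s). { apply (Rle_trans _ (/mn * mn)). rewrite Rinv_l; lra. apply Rmult_le_compat; try lra. left; apply Rinv_0_lt_compat; lra. }
    assert ((u - 1) <= T' * s * (u - 1)) by nra. nra.
  - set (u := T' / T). assert (Hu : 1 <= u) by (unfold u; apply (Rmult_le_reg_r T); auto; field_simplify; lra).
    assert (ET : T' = T * u) by (unfold u; field; lra).
    rewrite ET, ln_mult by lra. pose proof (ln_le_sub1 (/u) ltac:(apply Rinv_0_lt_compat; lra)).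
    rewrite ln_Rinv in H by lra.
    assert (T' * s <= 1). { apply (Rle_trans _ (/mx * mx)). apply Rmult_le_compat; lra. rewrite Rinv_l; lra. }
    assert (T * s <= / u). { rewrite ET in H0. apply (Rmult_le_reg_r u). lra. rewrite Rinv_l by lra. nra. }
    assert (T * s * (u - 1) <= / u * (u - 1)) by (apply Rmult_le_compat_r; lra).
    replace (/ u * (u - 1)) with (1 - / u) in H2 by (field; lra). nra.
  - subst; lra.
Qed.

Section Red.
Variables (mn mx a b : R).
Hypotheses (Hmn : 0 < mn) (Hmx : mn <= mx) (Ha : mx / mn <= a) (Hb : 0 < b).
Let a0 := mx / mn.
Let th := / mx.

Lemma a0_ge1 : 1 <= a0.
Proof. unfold a0. apply (Rmult_le_reg_r mn); auto. field_simplify; lra. Qed.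
Lemma a0_le : a0 <= a.
Proof. unfold a0; lra. Qed.
Lemma th2 : / mn = th * a0.
Proof. unfold th, a0. field. lra. Qed.
Lemma th_pos : 0 < th.
Proof. unfold th. apply Rinv_0_lt_compat; lra. Qed.

Lemma half_up b' b0 l : (b0 <= l)%nat -> 0 < b' ->
  / mn <= b' * a0 ^ b0 <= b * a ^ b0 -> / mn <= b' * a0 ^ l <= b * a ^ l.
Proof. intros Hl Hb' [h1 h2]. pose proof a0_ge1. pose proof a0_le.
  replace l with (b0 + (l - b0))%nat by lia. rewrite !pow_add.
  set (d := (l - b0)%nat).
  assert (1 <= a0 ^ d) by (apply pow_R1_Rle; lra).
  assert (a0 ^ d <= a ^ d) by (apply pow_incr; lra).
  assert (0 < a0 ^ b0) by (apply pow_lt; lra).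
  split. rewrite <- Rmult_assoc. assert (0 < b' * a0 ^ b0) by (apply Rmult_lt_0_compat; lra).
  assert (b' * a0 ^ b0 * 1 <= b' * a0 ^ b0 * a0 ^ d) by (apply Rmult_le_compat_l; lra). lra.
  rewrite <- !Rmult_assoc. apply Rmult_le_compat; try lra. nra. Qed.

Lemma half_dn b' b0 l : (l <= b0)%nat -> 0 < b' ->
  b * a ^ b0 <= b' * a0 ^ b0 <= th -> b * a ^ l <= b' * a0 ^ l <= th.
Proof. intros Hl Hb' [h1 h2]. pose proof a0_ge1. pose proof a0_le.
  replace b0 with (l + (b0 - l))%nat in h1, h2 by lia. repeat rewrite pow_add in h1. repeat rewrite pow_add in h2.
  set (d := (b0 - l)%nat) in *.
  assert (1 <= a0 ^ d) by (apply pow_R1_Rle; lra).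
  assert (a0 ^ d <= a ^ d) by (apply pow_incr; lra).
  assert (0 < a0 ^ l) by (apply pow_lt; lra).
  assert (0 < a ^ l) by (apply pow_lt; lra).
  rewrite <- !Rmult_assoc in h1, h2.
  assert (0 < b' * a0 ^ l) by (apply Rmult_lt_0_compat; lra).
  assert (0 < b * a ^ l) by (apply Rmult_lt_0_compat; lra).
  assert (b' * a0 ^ l * 1 <= b' * a0 ^ l * a0 ^ d) by (apply Rmult_le_compat_l; lra).
  assert (b * a ^ l * a0 ^ d <= b * a ^ l * a ^ d) by (apply Rmult_le_compat_l; lra).
  split; [|lra]. apply (Rmult_le_reg_r (a0 ^ d)). lra. lra. Qed.

Lemma reduce_exists k : exists b', 0 < b' /\ forall l, (l <= k)%nat -> Good mn mx (b * a ^ l) (b' * a0 ^ l).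
Proof.
  pose proof a0_ge1 as A0. pose proof a0_le as A1. pose proof th2 as T2. pose proof th_pos as TP.
  assert (Hapos : 0 < a) by lra.
  assert (Hp : forall l, 0 < a0 ^ l) by (intros; apply pow_lt; lra).
  assert (Hpa : forall l, 0 < a ^ l) by (intros; apply pow_lt; lra).
  destruct (Rle_lt_dec (b * a ^ 0) th) as [h0|h0].
  - destruct (classic (b * a ^ k <= th)) as [hk|hk].
    + exists (th / a0 ^ k). split. apply Rdiv_lt_0_compat; auto.
      intros l Hl. right; left. apply (half_dn _ k); auto. apply Rdiv_lt_0_compat; auto.
      replace (th / a0 ^ k * a0 ^ k) with th by (field; specialize (Hp k); lra). lra.
    + destruct (step_lemma (fun l => b * a ^ l <= th) k h0 hk) as [q [Hq [Pq nPq]]].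
      simpl in nPq. apply Rnot_le_lt in nPq.
      destruct (Rle_lt_dec (/ mn) (b * (a * a ^ q))) as [hB|hB].
      * exists (th / a0 ^ q). split. apply Rdiv_lt_0_compat; auto.
        assert (E : th / a0 ^ q * a0 ^ q = th) by (field; specialize (Hp q); lra).
        intros l Hl. destruct (Compare_dec.le_lt_dec l q).
        -- right; left. apply (half_dn _ q); auto. apply Rdiv_lt_0_compat; auto. lra.
        -- left. apply (half_up _ (S q)); auto. apply Rdiv_lt_0_compat; auto. simpl.
           replace (th / a0 ^ q * (a0 * a0 ^ q)) with (th * a0) by (field; specialize (Hp q); lra). lra.
      * set (V := b * (a * a ^ q)).
        assert (VP : 0 < V) by (unfold V; specialize (Hpa q); nra).
        exists (V / a0 ^ S q). split. apply Rdiv_lt_0_compat; auto.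
        intros l Hl. destruct (Compare_dec.lt_eq_lt_dec l (S q)) as [[lt|eq]|gt].
        -- right; left. apply (half_dn _ q); [lia| apply Rdiv_lt_0_compat; auto |]. simpl.
           replace (V / (a0 * a0 ^ q) * a0 ^ q) with (V / a0) by (field; specialize (Hp q); lra).
           assert (EV : V / a0 * a0 = V) by (field; lra).
           split; apply (Rmult_le_reg_r a0); try lra; rewrite EV.
           assert (b * a ^ q * a0 <= b * a ^ q * a) by (apply Rmult_le_compat_l; [specialize (Hpa q); nra| lra]).
           unfold V; lra. unfold V; lra.
        -- right; right. subst l. simpl. fold V. field. specialize (Hp q); lra.
        -- left. apply (half_up _ (S (S q))); [lia| apply Rdiv_lt_0_compat; auto |]. simpl.
           replace (V / (a0 * a0 ^ q) * (a0 * (a0 * a0 ^ q))) with (V * a0) by (field; specialize (Hp q); lra).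
           fold V. split. rewrite T2. apply Rmult_le_compat_r; unfold V; lra. unfold V. replace (b * (a * (a * a ^ q))) with (b * (a * a ^ q) * a) by ring. apply Rmult_le_compat_l; lra.
  - destruct (Rle_lt_dec (/ mn) b) as [hB|hB].
    + exists (/ mn). split. apply Rinv_0_lt_compat; lra. intros l Hl. left.
      apply (half_up _ 0); auto. lia. apply Rinv_0_lt_compat; lra. simpl. lra.
    + exists b. split; auto. intros l Hl. destruct l.
      * right; right. reflexivity.
      * left. apply (half_up _ 1); auto. lia. simpl in *. split; nra.
Qed.
End Red.

Lemma reduce_score n k s L a b g : (0 < n)%nat -> (forall i, (1 <= i <= n)%nat -> 0 < s i) ->
  valid_levels n k L -> maxS s n / minS s n <= a -> 0 < b ->
  exists b', 0 < b' /\ score_exp n s L (maxS s n / minS s n) b' g <= score_exp n s L a b g.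
Proof. intros Hn Hs HL Ha Hb.
  pose proof (minS_pos s n Hs Hn) as Hmn.
  assert (Hmx : minS s n <= maxS s n) by (pose proof (minmax_bound s n 1 ltac:(lia)); lra).
  assert (A0 : 1 <= maxS s n / minS s n) by (apply (Rmult_le_reg_r (minS s n)); auto; field_simplify; lra).
  destruct (reduce_exists _ _ _ _ Hmn Hmx Ha Hb k) as [b' [Hb' HG]].
  exists b'. split; auto. rewrite !score_eq by lra. apply sumR_le. intros i Hi.
  apply Rplus_le_compat_r. apply (term_mono (minS s n) (maxS s n)); auto.
  apply minmax_bound; auto. apply Rmult_lt_0_compat; auto; apply pow_lt; lra.
  apply Rmult_lt_0_compat; auto; apply pow_lt; lra.
Qed.

Lemma score_lin n s L a b g : 0 < a -> 0 < b ->
  score_exp n s L a b g = b * sumR (fun i => a ^ L i * s i) n - INR n * ln b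
     + sumR (fun i => - (INR (L i) * ln a) + pen n g (lprev L i) (L i)) n.
Proof. intros Ha Hb. rewrite score_eq by auto.
  rewrite (sumR_ext _ (fun i => (b * (a ^ L i * s i) + (-1) * ln b) + (- (INR (L i) * ln a) + pen n g (lprev L i) (L i))) n).
  rewrite !sumR_plus, sumR_scal, sumR_const. ring.
  intros i _. rewrite ln_mult, ln_pow by (auto; apply pow_lt; auto). ring.
Qed.

Lemma beta_opt n s L a b g : (0 < n)%nat -> (forall i, (1 <= i <= n)%nat -> 0 < s i) ->
  1 <= a -> 0 < b ->
  score_exp n s L a (INR n / sumR (fun i => a ^ L i * s i) n) g <= score_exp n s L a b g.
Proof. intros Hn Hs Ha Hb.
  set (A := sumR (fun i => a ^ L i * s i) n).
  assert (HA : 0 < A). { apply sumR_pos; auto. intros i Hi. apply Rmult_lt_0_compat; auto. apply pow_lt; lra. }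
  assert (HN : 0 < INR n) by (apply lt_0_INR; lia).
  rewrite !score_lin by (try lra; apply Rdiv_lt_0_compat; auto). fold A.
  apply Rplus_le_compat_r.
  replace (INR n / A * A) with (INR n) by (field; lra).
  pose proof (ln_le_sub1 (b * A / INR n) ltac:(apply Rdiv_lt_0_compat; auto; apply Rmult_lt_0_compat; auto)).
  unfold Rdiv in *. rewrite !ln_mult in * by (auto; apply Rinv_0_lt_compat; auto).
  rewrite !ln_Rinv in * by auto.
  rewrite ln_mult, ln_mult, ln_Rinv in H; auto; try (apply Rinv_0_lt_compat; auto); try (apply Rmult_lt_0_compat; auto).
  assert (INR n * (ln b + ln A + - ln (INR n)) <= INR n * (b * A * / INR n - 1)) by (apply Rmult_le_compat_l; lra).
  replace (INR n * (b * A * / INR n - 1)) with (b * A - INR n) in H0 by (field; lra).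
  nra.
Qed.

Lemma term_approx eps Q r x : 0 < eps -> 1 <= Q -> Q * Q <= 1 + eps -> / Q <= r <= 1 + eps / 2 -> 0 < x ->
  r * x - ln (r * x) <= (1 + eps) * (x - ln x).
Proof. intros He HQ HQQ [hr1 hr2] Hx.
  assert (HQp : 0 < Q) by lra.
  assert (Hr : 0 < r) by (pose proof (Rinv_0_lt_compat Q HQp); lra).
  rewrite ln_mult by lra.
  pose proof (ln_le_sub1 x Hx). pose proof (ln_le_half x Hx).
  assert (eps * 1 <= eps * (x - ln x)) by (apply Rmult_le_compat_l; lra).
  destruct (Rle_lt_dec r 1).
  - assert (ln (/ Q) <= ln r) by (apply lnle; auto; apply Rinv_0_lt_compat; lra).
    rewrite ln_Rinv in H2 by lra. pose proof (ln_le_sub1 Q HQp).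
    assert (Q - 1 <= eps) by nra.
    assert (r * x <= x) by nra. lra.
  - assert (0 <= ln r) by (rewrite <- ln_1; apply lnle; lra).
    assert (eps * (x / 2) <= eps * (x - ln x)) by (apply Rmult_le_compat_l; lra).
    assert ((r - 1) * x <= eps / 2 * x) by (apply Rmult_le_compat_r; lra). lra.
Qed.

Lemma term_approx2 eps Q r l s : 0 < eps -> 1 <= Q -> Q * Q <= 1 + eps -> / Q <= r <= 1 + eps / 2 -> 0 < l -> 0 < s ->
  (r * l) * s - ln (r * l) - ln s <= (1 + eps) * (l * s - ln l - ln s).
Proof. intros He HQ HQQ Hr Hl Hs.
  assert (HQp : 0 < Q) by lra.
  assert (0 < r) by (pose proof (Rinv_0_lt_compat Q HQp); lra).
  pose proof (term_approx eps Q r (l * s) He HQ HQQ Hr ltac:(apply Rmult_lt_0_compat; auto)).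
  rewrite !ln_mult in H0 by (auto; apply Rmult_lt_0_compat; auto).
  rewrite ln_mult by auto.
  replace (r * l * s) with (r * (l * s)) by ring. lra.
Qed.

Lemma c_props k eps : (0 < k)%nat -> 0 < eps ->
  1 < Rpower (1 + eps) (/ (2 * INR k)) /\ Rpower (1 + eps) (/ (2 * INR k)) ^ (k + k) = 1 + eps.
Proof. intros Hk He. assert (HK : 0 < INR k) by (apply lt_0_INR; lia). split.
  - unfold Rpower. assert (0 < / (2 * INR k) * ln (1 + eps)).
    { apply Rmult_lt_0_compat. apply Rinv_0_lt_compat; lra.
      pose proof (ln_increasing 1 (1 + eps) ltac:(lra) ltac:(lra)). rewrite ln_1 in H; lra. }
    pose proof (exp_increasing _ _ H). rewrite exp_0 in H0. lra.
  - rewrite <- Rpower_pow by (unfold Rpower; apply exp_pos).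
    rewrite Rpower_mult, plus_INR.
    replace (/ (2 * INR k) * (INR k + INR k)) with 1 by (field; lra).
    apply Rpower_1; lra.
Qed.

Lemma approx n k s L a g eps : (0 < n)%nat -> (forall i, (1 <= i <= n)%nat -> 0 < s i) ->
  (0 < k)%nat -> 0 < eps -> 0 < g -> valid_levels n k L -> 1 <= a -> a <= maxS s n / minS s n ->
  exists a' b', tested_pair n k s eps a' b' /\
    score_exp n s L a' b' g - psi n s <=
    (1 + eps) * (score_exp n s L a (INR n / sumR (fun i => a ^ L i * s i) n) g - psi n s).
Proof. intros Hn Hs Hk He Hg HL Ha1 Ha2.
  destruct (c_props k eps Hk He) as [Hc Hck].
  set (c := Rpower (1 + eps) (/ (2 * INR k))) in *.
  set (a0 := maxS s n / minS s n) in *.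
  assert (Hcp : forall j, 0 < c ^ j) by (intros; apply pow_lt; lra).
  destruct (pow_unbounded c a0 Hc) as [N HN].
  destruct (step_lemma (fun j => a <= a0 / c ^ j) N) as [j [_ [Pj nPj]]].
  { simpl. rewrite Rdiv_1_r. lra. }
  { intro h. assert (a0 / c ^ N < 1). { apply (Rmult_lt_reg_r (c ^ N)); auto. unfold Rdiv. rewrite Rmult_assoc, Rinv_l by (specialize (Hcp N); lra). lra. } lra. }
  simpl in nPj. apply Rnot_le_lt in nPj.
  set (a' := a0 / c ^ j) in *.
  assert (Ha'c : a' < c * a).
  { replace (a0 / (c * c ^ j)) with (a' / c) in nPj by (unfold a'; field; split; [specialize (Hcp j)|]; lra).
    apply (Rmult_lt_reg_r (/ c)). apply Rinv_0_lt_compat; lra.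
    replace (c * a * / c) with a by (field; lra). exact nPj. }
  set (q := a' / a).
  assert (Hq1 : 1 <= q) by (unfold q; apply (Rmult_le_reg_r a); [lra|]; field_simplify; lra).
  assert (Hqc : q <= c) by (unfold q; apply (Rmult_le_reg_r a); [lra|]; field_simplify; lra).
  set (Q := q ^ k).
  assert (HQ1 : 1 <= Q) by (apply pow_R1_Rle; lra).
  assert (HQQ : Q * Q <= 1 + eps).
  { unfold Q. rewrite <- pow_add, <- Hck. apply pow_incr; lra. }
  assert (Ea' : a' = q * a) by (unfold q; field; lra).
  set (Ss := sumR s n).
  set (A := sumR (fun i => a ^ L i * s i) n).
  assert (HSs : 0 < Ss) by (apply sumR_pos; auto).
  assert (HA1 : Ss <= A).
  { apply sumR_le. intros i Hi. specialize (Hs i Hi). assert (1 <= a ^ L i) by (apply pow_R1_Rle; lra). nra. }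
  assert (HA2 : A <= a ^ k * Ss).
  { unfold Ss. rewrite <- sumR_scal. apply sumR_le. intros i Hi. specialize (Hs i Hi).
    assert (a ^ L i <= a ^ k) by (apply Rle_pow; auto). nra. }
  assert (HN0 : 0 < INR n) by (apply lt_0_INR; lia).
  set (b0 := INR n / A).
  assert (Hb0 : 0 < b0) by (apply Rdiv_lt_0_compat; lra).
  assert (Hmu : / mean n s = INR n / Ss) by (unfold mean; fold Ss; field; lra).
  assert (Hmean : 0 < mean n s) by (unfold mean; apply Rdiv_lt_0_compat; auto).
  assert (He2 : 1 < 1 + eps / 2) by lra.
  set (e2 := 1 + eps / 2) in *.
  destruct (pow_unbounded e2 (/ mean n s / (b0 / Q)) He2) as [M HM].
  assert (Hb0Q : 0 < b0 / Q) by (apply Rdiv_lt_0_compat; lra).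
  destruct (step_lemma (fun m => b0 / Q <= expalpha_beta n s (eps / 2) m) M) as [m [_ [Pm nPm]]].
  { unfold expalpha_beta. simpl. rewrite Rdiv_1_r, Hmu.
    apply (Rle_trans _ b0). apply (Rmult_le_reg_r Q); [lra|]. field_simplify; nra.
    unfold b0. apply Rmult_le_compat_l; [lra|]. apply Rinv_le_contravar; lra. }
  { unfold expalpha_beta. intro h. fold e2 in h.
    assert (Hmp : 0 < e2 ^ M) by (apply pow_lt; lra).
    assert (/ mean n s < b0 / Q * e2 ^ M).
    { apply (Rmult_lt_reg_r (/ (b0 / Q))). apply Rinv_0_lt_compat; lra.
      replace (b0 / Q * e2 ^ M * / (b0 / Q)) with (e2 ^ M) by (field; lra). exact HM. }
    assert (b0 / Q * e2 ^ M <= / mean n s / e2 ^ M * e2 ^ M) by (apply Rmult_le_compat_r; lra).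
    replace (/ mean n s / e2 ^ M * e2 ^ M) with (/ mean n s) in H0 by (field; split; lra). lra. }
  simpl in nPm. apply Rnot_le_lt in nPm. unfold expalpha_beta in Pm, nPm. fold e2 in Pm, nPm.
  set (b' := / mean n s / e2 ^ m) in *.
  assert (Hb'2 : b' <= e2 * (b0 / Q)).
  { assert (0 < e2 ^ m) by (apply pow_lt; lra).
    replace (/ mean n s / e2 ^ S m) with (b' / e2) in nPm by (unfold b'; simpl; field; repeat split; lra).
    apply (Rmult_le_reg_r (/ e2)). apply Rinv_0_lt_compat; lra.
    replace (e2 * (b0 / Q) * / e2) with (b0 / Q) by (field; lra). unfold Rdiv in nPm; lra. }
  assert (Hb'p : 0 < b') by lra.
  exists a', b'. split.
  - exists j, m. split; [reflexivity|]. split; [rewrite Ea'; nra|]. split; [reflexivity|].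
    apply (Rle_trans _ (b0 / Q)); auto.
    rewrite Hmu in *. 
    assert (EQ : Q * a ^ k = a' ^ k) by (unfold Q; rewrite Ea', Rpow_mult_distr; ring).
    assert (0 < a ^ k) by (apply pow_lt; lra).
    assert (/ mean n s = INR n / Ss) by auto.
    unfold mean; fold Ss. unfold b0.
    replace (/ (a' ^ k * (Ss / INR n))) with (INR n / (Ss * a' ^ k)) by (field; split; [|split]; try lra; rewrite <- EQ; nra).
    replace (INR n / A / Q) with (INR n / (A * Q)) by (field; lra).
    unfold Rdiv. apply Rmult_le_compat_l; [lra|]. apply Rinv_le_contravar. nra.
    rewrite <- EQ. nra.
  - rewrite !score_eq by lra. rewrite psi_eq by auto.
    rewrite <- !sumR_minus, <- sumR_scal. apply sumR_le. intros i Hi.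
    specialize (Hs i Hi). pose proof (pen_nonneg n g (lprev L i) (L i) Hn Hg).
    set (r := b' / b0 * q ^ L i).
    assert (Hqi1 : 1 <= q ^ L i) by (apply pow_R1_Rle; lra).
    assert (Hqi2 : q ^ L i <= Q) by (apply Rle_pow; auto).
    assert (Hr : / Q <= r <= 1 + eps / 2).
    { unfold r. split.
      - apply (Rle_trans _ (b' / b0)). replace (/ Q) with ((b0 / Q) / b0) by (field; lra).
        unfold Rdiv; apply Rmult_le_compat_r; [left; apply Rinv_0_lt_compat|]; lra.
        assert (0 <= b' / b0) by (apply Rlt_le, Rdiv_lt_0_compat; lra). nra.
      - assert (b' / b0 <= e2 / Q).
        { replace (e2 / Q) with (e2 * (b0 / Q) / b0) by (field; lra).
          unfold Rdiv; apply Rmult_le_compat_r; [left; apply Rinv_0_lt_compat|]; lra. }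
        assert (b' / b0 * q ^ L i <= e2 / Q * Q).
        { apply Rmult_le_compat; try lra. apply Rlt_le, Rdiv_lt_0_compat; lra. }
        replace (e2 / Q * Q) with e2 in H1 by (field; lra). unfold e2 in H1. lra. }
    assert (El : b' * a' ^ L i = r * (b0 * a ^ L i)).
    { unfold r. rewrite Ea', Rpow_mult_distr. field. lra. }
    rewrite El.
    assert (Hl : 0 < b0 * a ^ L i) by (apply Rmult_lt_0_compat; auto; apply pow_lt; lra).
    pose proof (term_approx2 eps Q r _ _ He HQ1 HQQ Hr Hl Hs). nra.
Qed.
Theorem proposition8
  (n k : nat) (s : nat -> R) (gamma eps : R)
  (Hn : (0 < n)%nat) (Hs : forall i, (1 <= i <= n)%nat -> 0 < s i)
  (Hgamma : 0 < gamma) (Hk : (0 < k)%nat) (Heps : 0 < eps)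
  (* (Lopt, aopt, bopt) is an optimal solution of Exp for S, gamma, k *)
  (Lopt : nat -> nat) (aopt bopt : R)
  (HLopt : valid_levels n k Lopt) (Haopt : 1 <= aopt) (Hbopt : 0 < bopt)
  (Hopt : forall (L : nat -> nat) (a b : R), valid_levels n k L -> 1 <= a -> 0 < b ->
     score_exp n s Lopt aopt bopt gamma <= score_exp n s L a b gamma)
  (* the Viterbi subroutine *)
  (viterbi : R -> R -> nat -> nat)
  (Hvit : forall a b, viterbi_spec n k s gamma a b (viterbi a b))
  (* the output (L, alpha, beta) of ApproxExp: an observed triple of smallest score *)
  (alpha beta : R)
  (Htested : tested_pair n k s eps alpha beta)
  (Hbest : forall a b, tested_pair n k s eps a b ->
     score_exp n s (viterbi alpha beta) alpha beta gamma
       <= score_exp n s (viterbi a b) a b gamma) :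
  score_exp n s (viterbi alpha beta) alpha beta gamma - psi n s
    <= (1 + eps) * (score_exp n s Lopt aopt bopt gamma - psi n s)
  /\ (1 <= geo_mean n s ->
      score_exp n s (viterbi alpha beta) alpha beta gamma
        <= (1 + eps) * score_exp n s Lopt aopt bopt gamma).
Proof.
  pose proof (minS_pos s n Hs Hn) as Hmn.
  assert (Hmx : minS s n <= maxS s n) by (pose proof (minmax_bound s n 1 ltac:(lia)); lra).
  assert (A0 : 1 <= maxS s n / minS s n) by (apply (Rmult_le_reg_r (minS s n)); auto; field_simplify; lra).
  assert (Hred : exists a1 b1, 1 <= a1 <= maxS s n / minS s n /\ 0 < b1 /\
            score_exp n s Lopt a1 b1 gamma <= score_exp n s Lopt aopt bopt gamma).
  { destruct (Rle_lt_dec aopt (maxS s n / minS s n)).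
    - exists aopt, bopt. repeat split; auto; lra.
    - destruct (reduce_score n k s Lopt aopt bopt gamma Hn Hs HLopt ltac:(lra) Hbopt) as [b' [Hb' Hsc]].
      exists (maxS s n / minS s n), b'. repeat split; auto; lra. }
  destruct Hred as [a1 [b1 [Ha1 [Hb1 Hsc1]]]].
  pose proof (beta_opt n s Lopt a1 b1 gamma Hn Hs ltac:(lra) Hb1) as Hsc2.
  destruct (approx n k s Lopt a1 gamma eps Hn Hs Hk Heps Hgamma HLopt ltac:(lra) ltac:(lra))
    as [a' [b' [Ht Hsc3]]].
  pose proof (Hbest a' b' Ht) as Hsc4.
  destruct (Hvit a' b') as [_ Hv]. pose proof (Hv Lopt HLopt) as Hsc5.
  assert (Main : score_exp n s (viterbi alpha beta) alpha beta gamma - psi n s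
    <= (1 + eps) * (score_exp n s Lopt aopt bopt gamma - psi n s)).
  { set (X := score_exp n s Lopt a1 (INR n / sumR (fun i => a1 ^ Lopt i * s i) n) gamma) in *.
    assert ((1 + eps) * (X - psi n s) <= (1 + eps) * (score_exp n s Lopt aopt bopt gamma - psi n s))
      by (apply Rmult_le_compat_l; lra). lra. }
  split; auto.
  intros Hg. assert (0 <= psi n s).
  { unfold psi. apply Rmult_le_pos. apply pos_INR. rewrite <- ln_1. apply lnle; lra. }
  nra.
Qed.
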